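(* For $\eta\in\mathbb{R}$, let $\mathfrak{s}_\eta=\mathfrak{r}_\eta\ltimes_{\mu_\eta}\mathbb{R}^4$, where $\mathfrak{r}_\eta=\langle e_1,e_2,e_3\rangle$ has non-zero brackets $[e_1,e_2]=e_2+\eta e_3$, $[e_1,e_3]=-\eta e_2+e_3$, $\mathbb{R}^4=\langle e_4,e_5,e_6,e_7\rangle$ is abelian, and $\mu_\eta:\mathfrak{r}_\eta\to\mathfrak{gl}(4,\mathbb{R})$ is given (in the basis $e_4,\dots,e_7$) by \[ \mu_\eta(e_1)=\begin{pmatrix}-\frac12&0&0&0\\0&-\frac12&0&0\\0&0&\frac12&\eta\\0&0&-\eta&\frac12\end{pmatrix},\ \mu_\eta(e_2)=\begin{pmatrix}0&0&0&0\\0&0&0&0\\0&-1&0&0\\-1&0&0&0\end{pmatrix},\ \mu_\eta(e_3)=\begin{pmatrix}0&0&0&0\\0&0&0&0\\-1&0&0&0\\0&1&0&0\end{pmatrix}. \] Then the 3-form $\varphi=e^{123}+e^{145}+e^{167}+e^{246}-e^{257}-e^{347}-e^{356}$ on $\mathfrak{s}_\eta$ (with $(e^i)$ dual to $(e_i)$) is exact, defines an ERP closed $\mathrm{G}_2$-structure, and has intrinsic torsion form $\tau=3e^{45}-3e^{67}$. For $\eta=0$ the Lie algebra is completely solvable, while for $\eta\neq0$ it is solvable but not completely solvable, and the Lie algebras $\mathfrak{s}_\eta$, $\eta\ge0$, are pairwise non-isomorphic.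
   Context: $\mathfrak{r}\ltimes_\mu\mathbb{R}^4$ denotes the semidirect product with bracket $[X,v]=\mu(X)v$ for $X\in\mathfrak{r}$, $v\in\mathbb{R}^4$. A $\mathrm{G}_2$-structure on a 7-dimensional Lie algebra is a 3-form $\varphi$ equal to $e^{123}+e^{145}+e^{167}+e^{246}-e^{257}-e^{347}-e^{356}$ in some basis; it determines an inner product $g_\varphi$ (making that basis orthonormal), a Hodge star $*_\varphi$ and norm $|\cdot|_\varphi$. It is closed if $d\varphi=0$ ($d$ the Chevalley–Eilenberg differential); then its intrinsic torsion form is the unique 2-form $\tau$ with $\tau\wedge*_\varphi\varphi=0$ and $d*_\varphi\varphi=\tau\wedge\varphi$. It is ERP if $d\tau=\frac16|\tau|_\varphi^2\varphi+\frac16*_\varphi(\tau\wedge\tau)$. A solvable Lie algebra is completely solvable if all $\mathrm{ad}_X$ have only real eigenvalues. *)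

(* Defs.v *)
(* Real numbers are modelled by an arbitrary real closed
   field R (elementarily equivalent to the reals). *)
From HB Require Import structures.
From mathcomp Require Import all_boot all_order all_algebra.
Set Implicit Arguments. Unset Strict Implicit. Unset Printing Implicit Defensive.
Import Order.TTheory GRing.Theory Num.Theory.
Local Open Scope ring_scope.

Section G2.
Variable R : rcfType.

(* Lie algebras on R^n given on the basis e_0..e_(n-1):                *)
(*   brk i j = [e_i, e_j] as a row vector of coordinates.             *)
Definition lie_bracket n (brk : 'I_n -> 'I_n -> 'rV[R]_n) (x y : 'rV[R]_n)
  : 'rV[R]_n := \sum_(i < n) \sum_(j < n) (x 0 i * y 0 j) *: brk i j.

Definition basis_vec n (i : 'I_n) : 'rV[R]_n := delta_mx 0 i.

(* matrix of ad_x acting on row vectors: v *m ad_mx x = [x, v] *)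
Definition ad_mx n (brk : 'I_n -> 'I_n -> 'rV[R]_n) (x : 'rV[R]_n) : 'M[R]_n :=
  \matrix_(i < n) lie_bracket brk x (basis_vec i).

Definition derived n (brk : 'I_n -> 'I_n -> 'rV[R]_n) (A : 'M[R]_n) : 'M[R]_n :=
  (\sum_(i < n) \sum_(j < n) <<lie_bracket brk (row i A) (row j A)>>)%MS.

Definition solvable_lie n (brk : 'I_n -> 'I_n -> 'rV[R]_n) : Prop :=
  exists k, \rank (iter k (derived brk) 1%:M) = 0%N.

(* a + i b is an eigenvalue of the complexification of the endomorphism
   v |-> v *m A, i.e. A (u + i v) = (a + i b)(u + i v) with u + i v <> 0 *)
Definition complex_eigenvalue n (A : 'M[R]_n) (a b : R) : Prop :=
  exists u v : 'rV[R]_n, (u != 0 \/ v != 0) /\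
    u *m A = a *: u - b *: v /\ v *m A = b *: u + a *: v.

Definition only_real_eigenvalues n (A : 'M[R]_n) : Prop :=
  forall a b, complex_eigenvalue A a b -> b = 0.

Definition completely_solvable n (brk : 'I_n -> 'I_n -> 'rV[R]_n) : Prop :=
  solvable_lie brk /\ forall x, only_real_eigenvalues (ad_mx brk x).

Definition lie_iso n (brk1 brk2 : 'I_n -> 'I_n -> 'rV[R]_n) : Prop :=
  exists P : 'M[R]_n, P \in unitmx /\
    forall x y, lie_bracket brk1 x y *m P = lie_bracket brk2 (x *m P) (y *m P).

(* Exterior algebra of the dual of R^7: a form is given by its         *)
(* coefficients a S on e^S, S = {s_1 < ... < s_p} (all degrees).      *)
(* a S is also the value a(e_{s_1},...,e_{s_p}).                      *)
Definition form := {ffun {set 'I_7} -> R}.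

Definition homog (p : nat) (a : form) : Prop := forall S : {set 'I_7}, #|S| != p -> a S = 0.

Definition shuffle_sign (I J : {set 'I_7}) : R :=
  (-1) ^+ #|[set ij in setX I J | (ij.2 < ij.1)%N]|.

Definition wedge (a b : form) : form :=
  [ffun K : {set 'I_7} => \sum_(I : {set 'I_7} | I \subset K) shuffle_sign I (K :\: I) * a I * b (K :\: I)].

Definition form1 : form := [ffun S : {set 'I_7} => if S == set0 then 1 else 0].
Definition addf (a b : form) : form := [ffun S : {set 'I_7} => a S + b S].
Definition scalef (c : R) (a : form) : form := [ffun S : {set 'I_7} => c * a S].

(* 1-based indexing, as in the paper: e^k for k = 1..7 *)
Definition ix (k : nat) : 'I_7 := inord k.-1.
Definition e1f (k : nat) : form := [ffun S : {set 'I_7} => if S == [set ix k] then 1 else 0].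
Definition eup (l : seq nat) : form := foldr (fun k a => wedge (e1f k) a) form1 l.

(* Chevalley--Eilenberg differential (trivial coefficients):
   d a (x_0..x_p) = sum_{i<j} (-1)^(i+j) a([x_i,x_j], x_0..^i..^j..x_p) *)
Definition pos (K : {set 'I_7}) (k : 'I_7) : nat := #|[set i in K | (i < k)%N]|.
(* a(e_m, e_{s_1},...,e_{s_q}) for S = {s_1<...<s_q} *)
Definition eval_front (a : form) (m : 'I_7) (S : {set 'I_7}) : R :=
  if m \in S then 0 else (-1) ^+ pos S m * a (m |: S).

Definition dCE (brk : 'I_7 -> 'I_7 -> 'rV[R]_7) (a : form) : form :=
  [ffun K : {set 'I_7} => \sum_(i in K) \sum_(j in K | (i < j)%N)
     (-1) ^+ (pos K i + pos K j) *
       \sum_(m < 7) brk i j 0 m * eval_front a m (K :\ i :\ j)].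

(* Metric/orientation determined by the standard G2 form in the basis e_i:
   the e_i are orthonormal, the e^S orthonormal, vol = e^{1..7}. *)
Definition hodge (a : form) : form :=
  [ffun J : {set 'I_7} => shuffle_sign (~: J) J * a (~: J)].
Definition norm2 (a : form) : R := \sum_(S : {set 'I_7}) a S ^+ 2.

Definition phi_std : form :=
  addf (eup [:: 1; 2; 3]%N) (addf (eup [:: 1; 4; 5]%N) (addf (eup [:: 1; 6; 7]%N)
  (addf (eup [:: 2; 4; 6]%N) (addf (scalef (-1) (eup [:: 2; 5; 7]%N))
  (addf (scalef (-1) (eup [:: 3; 4; 7]%N)) (scalef (-1) (eup [:: 3; 5; 6]%N))))))).

Definition closed_form brk (a : form) : Prop := dCE brk a = 0.
Definition exact_form brk (a : form) : Prop :=
  exists b : form, homog 2 b /\ dCE brk b = a.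

Definition is_torsion_form brk (phi tau : form) : Prop :=
  homog 2 tau /\ wedge tau (hodge phi) = 0 /\ dCE brk (hodge phi) = wedge tau phi.

Definition ERP brk (phi tau : form) : Prop :=
  dCE brk tau = addf (scalef (norm2 tau / 6) phi) (scalef (1 / 6) (hodge (wedge tau tau))).

Definition rowl n (l : seq R) : 'rV[R]_n := \row_(k < n) nth 0 l k.
Definition mx4 (l : seq (seq R)) : 'M[R]_4 :=
  \matrix_(i < 4, j < 4) nth 0 (nth [::] l i) j.

(* r_eta: [e1,e2] = e2 + eta e3, [e1,e3] = -eta e2 + e3 (0-based here) *)
Definition brk_r (eta : R) (i j : 'I_3) : 'rV[R]_3 :=
  match (val i, val j)%N with
  | (0, 1) => rowl 3 [:: 0; 1; eta]
  | (1, 0) => - rowl 3 [:: 0; 1; eta]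
  | (0, 2) => rowl 3 [:: 0; - eta; 1]
  | (2, 0) => - rowl 3 [:: 0; - eta; 1]
  | _ => 0
  end.

Definition mu (eta : R) (i : 'I_3) : 'M[R]_4 :=
  match (val i)%N with
  | 0%N => mx4 [:: [:: -(1/2); 0; 0; 0]; [:: 0; -(1/2); 0; 0];
                 [:: 0; 0; 1/2; eta]; [:: 0; 0; - eta; 1/2]]
  | 1%N => mx4 [:: [:: 0; 0; 0; 0]; [:: 0; 0; 0; 0];
                 [:: 0; -1; 0; 0]; [:: -1; 0; 0; 0]]
  | _ => mx4 [:: [:: 0; 0; 0; 0]; [:: 0; 0; 0; 0];
                 [:: -1; 0; 0; 0]; [:: 0; 1; 0; 0]]
  end.

(* semidirect product r |x_mu R^4 on R^7 = R^3 (+) R^4, [X,v] = mu(X) v *)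
Definition semidirect_brk (br : 'I_3 -> 'I_3 -> 'rV[R]_3) (m : 'I_3 -> 'M[R]_4)
  (i j : 'I_7) : 'rV[R]_7 :=
  match split (i : 'I_(3 + 4)), split (j : 'I_(3 + 4)) with
  | inl a, inl b => row_mx (br a b) 0
  | inl a, inr v => row_mx (0 : 'rV[R]_3) ((col v (m a))^T)
  | inr v, inl a => - row_mx (0 : 'rV[R]_3) ((col v (m a))^T)
  | inr _, inr _ => 0
  end.

Definition s_brk (eta : R) : 'I_7 -> 'I_7 -> 'rV[R]_7 :=
  semidirect_brk (brk_r eta) (mu eta).

Definition tau_s : form := addf (scalef 3 (eup [:: 4; 5]%N)) (scalef (-3) (eup [:: 6; 7]%N)).

End G2.

(* Main.v *)
Require Import Defs.
From HB Require Import structures.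
From mathcomp Require Import all_boot all_order all_algebra.
From mathcomp Require Import ring lra.
Import Order.TTheory GRing.Theory Num.Theory.
Local Open Scope ring_scope.
Set Implicit Arguments. Unset Strict Implicit. Unset Printing Implicit Defensive.

Fixpoint allb (n : nat) : seq (seq bool) :=
  if n is n'.+1 then [seq b :: l | b <- [:: false; true], l <- allb n'] else [:: [::]].
Definition allbl := allb 7.
Definition I7 := iota 0 7.
Definition nb (s : seq bool) (i : nat) := nth false s i.
Definition subb s k := all (fun i => nb s i ==> nb k i) I7.
Definition diffb k s := mkseq (fun i => nb k i && ~~ nb s i) 7.
Definition compb k := mkseq (fun i => ~~ nb k i) 7.
Definition cnt s t := sumn [seq sumn [seq (nb s i && nb t j && (j < i)%N) : nat | j <- I7] | i <- I7].
Definition posb s i := sumn [seq (nb s x && (x < i)%N) : nat | x <- I7].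
Definition rm2 k i j := mkseq (fun x => nb k x && (x != i) && (x != j)) 7.
Definition addb m s := mkseq (fun x => (x == m) || nb s x) 7.
Definition popc s := sumn [seq (nb s x : nat) | x <- I7].
Definition unitb p := mkseq (fun i => i == p.-1) 7.

Definition t0 (i j m : nat) : nat :=
  match i, j, m with
  | 0, 1, 1 => 1
  | 0, 2, 2 => 1
  | 0, 3, 3 => 4
  | 0, 4, 4 => 4
  | 0, 5, 5 => 3
  | 0, 6, 6 => 3
  | 1, 0, 1 => 2
  | 1, 3, 6 => 2
  | 1, 4, 5 => 2
  | 2, 0, 2 => 2
  | 2, 3, 5 => 2
  | 2, 4, 6 => 1
  | 3, 0, 3 => 3
  | 3, 1, 6 => 1
  | 3, 2, 5 => 1
  | 4, 0, 4 => 3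
  | 4, 1, 5 => 1
  | 4, 2, 6 => 2
  | 5, 0, 5 => 4
  | 6, 0, 6 => 4
  | _, _, _ => 0%N
  end.
Definition t1 (i j m : nat) : nat :=
  match i, j, m with
  | 0, 1, 2 => 1
  | 0, 2, 1 => 2
  | 0, 5, 6 => 2
  | 0, 6, 5 => 1
  | 1, 0, 2 => 2
  | 2, 0, 1 => 1
  | 5, 0, 6 => 1
  | 6, 0, 5 => 2
  | _, _, _ => 0%N
  end.
Definition cinvL : seq (seq bool * seq (seq bool * nat)) := [::
  ([:: true; true; false; false; false; false; false], [:: ([:: true; true; true; false; true; true; false], 4%N); ([:: true; true; true; true; false; false; true], 4%N); ([:: false; false; true; true; true; true; true], 4%N)]);
  ([:: true; false; true; false; false; false; false], [:: ([:: true; true; true; true; false; true; false], 4%N); ([:: true; true; true; false; true; false; true], 3%N); ([:: false; true; false; true; true; true; true], 3%N)]);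
  ([:: false; true; true; false; false; false; false], [:: ([:: true; true; true; true; true; false; false], 3%N); ([:: true; true; true; false; false; true; true], 3%N); ([:: true; false; false; true; true; true; true], 4%N)]);
  ([:: true; false; false; true; false; false; false], [:: ([:: true; false; true; true; true; true; false], 3%N); ([:: true; true; false; true; true; false; true], 3%N); ([:: false; true; true; false; true; true; true], 4%N)]);
  ([:: false; true; false; true; false; false; false], [:: ([:: false; true; true; true; true; true; false], 3%N); ([:: true; true; false; true; false; true; true], 3%N); ([:: true; false; true; false; true; true; true], 3%N)]);
  ([:: false; false; true; true; false; false; false], [:: ([:: false; true; true; true; true; false; true], 4%N); ([:: true; false; true; true; false; true; true], 3%N); ([:: true; true; false; false; true; true; true], 4%N)]);
  ([:: true; false; false; false; true; false; false], [:: ([:: true; true; false; true; true; true; false], 3%N); ([:: true; false; true; true; true; false; true], 4%N); ([:: false; true; true; true; false; true; true], 3%N)]);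
  ([:: false; true; false; false; true; false; false], [:: ([:: false; true; true; true; true; false; true], 4%N); ([:: true; false; true; true; false; true; true], 4%N); ([:: true; true; false; false; true; true; true], 3%N)]);
  ([:: false; false; true; false; true; false; false], [:: ([:: false; true; true; true; true; true; false], 4%N); ([:: true; true; false; true; false; true; true], 3%N); ([:: true; false; true; false; true; true; true], 3%N)]);
  ([:: false; false; false; true; true; false; false], [:: ([:: true; true; true; true; true; false; false], 3%N); ([:: true; true; true; false; false; true; true], 4%N); ([:: true; false; false; true; true; true; true], 3%N)]);
  ([:: true; false; false; false; false; true; false], [:: ([:: false; true; true; true; true; false; true], 4%N); ([:: true; false; true; true; false; true; true], 4%N); ([:: true; true; false; false; true; true; true], 4%N)]);
  ([:: false; true; false; false; false; true; false], [:: ([:: true; true; false; true; true; true; false], 3%N); ([:: true; false; true; true; true; false; true], 3%N); ([:: false; true; true; true; false; true; true], 4%N)]);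
  ([:: false; false; true; false; false; true; false], [:: ([:: true; false; true; true; true; true; false], 3%N); ([:: true; true; false; true; true; false; true], 4%N); ([:: false; true; true; false; true; true; true], 3%N)]);
  ([:: false; false; false; true; false; true; false], [:: ([:: true; true; true; true; false; true; false], 3%N); ([:: true; true; true; false; true; false; true], 3%N); ([:: false; true; false; true; true; true; true], 3%N)]);
  ([:: false; false; false; false; true; true; false], [:: ([:: true; true; true; false; true; true; false], 3%N); ([:: true; true; true; true; false; false; true], 4%N); ([:: false; false; true; true; true; true; true], 4%N)]);
  ([:: true; false; false; false; false; false; true], [:: ([:: false; true; true; true; true; true; false], 3%N); ([:: true; true; false; true; false; true; true], 4%N); ([:: true; false; true; false; true; true; true], 3%N)]);
  ([:: false; true; false; false; false; false; true], [:: ([:: true; false; true; true; true; true; false], 4%N); ([:: true; true; false; true; true; false; true], 3%N); ([:: false; true; true; false; true; true; true], 3%N)]);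
  ([:: false; false; true; false; false; false; true], [:: ([:: true; true; false; true; true; true; false], 3%N); ([:: true; false; true; true; true; false; true], 3%N); ([:: false; true; true; true; false; true; true], 3%N)]);
  ([:: false; false; false; true; false; false; true], [:: ([:: true; true; true; false; true; true; false], 4%N); ([:: true; true; true; true; false; false; true], 3%N); ([:: false; false; true; true; true; true; true], 4%N)]);
  ([:: false; false; false; false; true; false; true], [:: ([:: true; true; true; true; false; true; false], 3%N); ([:: true; true; true; false; true; false; true], 3%N); ([:: false; true; false; true; true; true; true], 4%N)]);
  ([:: false; false; false; false; false; true; true], [:: ([:: true; true; true; true; true; false; false], 4%N); ([:: true; true; true; false; false; true; true], 3%N); ([:: true; false; false; true; true; true; true], 3%N)])].
Definition phiL : seq rat := [:: 0%:Q; 0%:Q; 0%:Q; 0%:Q; 0%:Q; 0%:Q; 0%:Q; 0%:Q; 0%:Q; 0%:Q; 0%:Q; 0%:Q; 0%:Q; 0%:Q; 0%:Q; 0%:Q; 0%:Q; 0%:Q; 0%:Q; 0%:Q; 0%:Q; 0%:Q; (-1)%:Q; 0%:Q; 0%:Q; (-1)%:Q; 0%:Q; 0%:Q; 0%:Q; 0%:Q; 0%:Q; 0%:Q; 0%:Q; 0%:Q; 0%:Q; 0%:Q; 0%:Q; (-1)%:Q; 0%:Q; 0%:Q; 0%:Q; 0%:Q; 1%:Q; 0%:Q; 0%:Q; 0%:Q; 0%:Q; 0%:Q; 0%:Q; 0%:Q; 0%:Q; 0%:Q; 0%:Q; 0%:Q; 0%:Q; 0%:Q; 0%:Q; 0%:Q;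 0%:Q; 0%:Q; 0%:Q; 0%:Q; 0%:Q; 0%:Q; 0%:Q; 0%:Q; 0%:Q; 1%:Q; 0%:Q; 0%:Q; 0%:Q; 0%:Q; 0%:Q; 0%:Q; 0%:Q; 0%:Q; 1%:Q; 0%:Q; 0%:Q; 0%:Q; 0%:Q; 0%:Q; 0%:Q; 0%:Q; 0%:Q; 0%:Q; 0%:Q; 0%:Q; 0%:Q; 0%:Q; 0%:Q; 0%:Q; 0%:Q; 0%:Q; 0%:Q; 0%:Q; 0%:Q; 0%:Q; 0%:Q; 0%:Q; 0%:Q; 0%:Q; 0%:Q; 0%:Q; 0%:Q; 0%:Q; 0%:Q; 0%:Q; 0%:Q; 0%:Q; 0%:Q; 0%:Q; 1%:Q; 0%:Q; 0%:Q; 0%:Q; 0%:Q; 0%:Q; 0%:Q; 0%:Q; 0%:Q; 0%:Q; 0%:Q; 0%:Q; 0%:Q; 0%:Q; 0%:Q; 0%:Q].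
Definition tauL : seq rat := [:: 0%:Q; 0%:Q; 0%:Q; (-3)%:Q; 0%:Q; 0%:Q; 0%:Q; 0%:Q; 0%:Q; 0%:Q; 0%:Q; 0%:Q; 3%:Q; 0%:Q; 0%:Q; 0%:Q; 0%:Q; 0%:Q; 0%:Q; 0%:Q; 0%:Q; 0%:Q; 0%:Q; 0%:Q; 0%:Q; 0%:Q; 0%:Q; 0%:Q; 0%:Q; 0%:Q; 0%:Q; 0%:Q; 0%:Q; 0%:Q; 0%:Q; 0%:Q; 0%:Q; 0%:Q; 0%:Q; 0%:Q; 0%:Q; 0%:Q; 0%:Q; 0%:Q; 0%:Q; 0%:Q; 0%:Q; 0%:Q; 0%:Q; 0%:Q; 0%:Q; 0%:Q; 0%:Q; 0%:Q; 0%:Q; 0%:Q; 0%:Q; 0%:Q; 0%:Q; 0%:Q; 0%:Q; 0%:Q; 0%:Q; 0%:Q; 0%:Q; 0%:Q; 0%:Q; 0%:Q; 0%:Q; 0%:Q; 0%:Q; 0%:Q; 0%:Q; 0%:Q; 0%:Q; 0%:Q; 0%:Q; 0%:Q; 0%:Q; 0%:Q; 0%:Q; 0%:Q; 0%:Q; 0%:Q; 0%:Q; 0%:Q; 0%:Q; 0%:Q; 0%:Q; 0%:Q; 0%:Q; 0%:Q; 0%:Q; 0%:Q; 0%:Q; 0%:Q; 0%:Q; 0%:Q; 0%:Q; 0%:Q; 0%:Q; 0%:Q; 0%:Q; 0%:Q; 0%:Q; 0%:Q; 0%:Q; 0%:Q; 0%:Q; 0%:Q; 0%:Q; 0%:Q;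 0%:Q; 0%:Q; 0%:Q; 0%:Q; 0%:Q; 0%:Q; 0%:Q; 0%:Q; 0%:Q; 0%:Q; 0%:Q; 0%:Q; 0%:Q; 0%:Q; 0%:Q; 0%:Q].
Section Model.
Variable F : fieldType.
Definition msum {X} (l : seq X) (f : X -> F) := foldr (fun x acc => f x + acc) 0 l.
Definition memo (a : seq bool -> F) : seq bool -> F :=
  let l := map a allbl in fun s => nth 0 l (index s allbl).
Definition sgn n : F := (-1) ^+ n.
Definition Mwedge (a b : seq bool -> F) := memo (fun k => msum allbl (fun s =>
  if subb s k then sgn (cnt s (diffb k s)) * a s * b (diffb k s) else 0)).
Definition Mhodge (a : seq bool -> F) := memo (fun k => sgn (cnt (compb k) k) * a (compb k)).
Definition Madd (a b : seq bool -> F) := fun k => a k + b k.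
Definition Mscale c (a : seq bool -> F) := fun k => c * a k.
Definition Mform1 : seq bool -> F := fun k => if k == nseq 7 false then 1 else 0.
Definition Me1f p : seq bool -> F := fun k => if k == unitb p then 1 else 0.
Definition Meup l := foldr (fun p a => Mwedge (Me1f p) a) Mform1 l.
Definition Mevf (a : seq bool -> F) m s := if nb s m then 0 else sgn (posb s m) * a (addb m s).
Definition MdCE (g : nat -> nat -> nat -> F) (a : seq bool -> F) := memo (fun k =>
  msum I7 (fun i => if nb k i then msum I7 (fun j => if nb k j && (i < j)%N then
    sgn (posb k i + posb k j) * msum I7 (fun m => g i j m * Mevf a m (rm2 k i j)) else 0) else 0)).
Definition Mnorm2 (a : seq bool -> F) := msum allbl (fun s => a s ^+ 2).
Definition cv (c : nat) : F := match c with 0 => 0 | 1 => 1 | 2 => -1 | 3 => 1/2 | _ => -(1/2) end.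
Definition Mphi : seq bool -> F :=
  Madd (Meup [:: 1; 2; 3]%N) (Madd (Meup [:: 1; 4; 5]%N) (Madd (Meup [:: 1; 6; 7]%N)
  (Madd (Meup [:: 2; 4; 6]%N) (Madd (Mscale (-1) (Meup [:: 2; 5; 7]%N))
  (Madd (Mscale (-1) (Meup [:: 3; 4; 7]%N)) (Mscale (-1) (Meup [:: 3; 5; 6]%N))))))).
Definition Mtau : seq bool -> F := Madd (Mscale 3 (Meup [:: 4; 5]%N)) (Mscale (-3) (Meup [:: 6; 7]%N)).
End Model.
Lemma allb_size n s : s \in allb n -> size s = n.
Proof.
elim: n s => [|n IH] s; first by rewrite inE => /eqP ->.
by case/allpairsP => [[b l] [_ /IH hl ->]] /=; rewrite hl.
Qed.

Lemma mem_allb n s : size s = n -> s \in allb n.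
Proof.
elim: n s => [|n IH] [|b s] // hs.
have {}hs : size s = n by case: hs.
apply/allpairsP; exists (b, s); split => //; last exact: IH.
by case: b.
Qed.

Lemma allbl_size s : s \in allbl -> size s = 7%N.
Proof. exact: allb_size. Qed.

Lemma mkseq_allbl f : mkseq f 7 \in allbl.
Proof. by apply: mem_allb; rewrite size_mkseq. Qed.

Lemma uniq_allbl : uniq allbl.
Proof. by vm_compute. Qed.

Lemma mem_I7 i : (i \in I7) = (i < 7)%N.
Proof. by rewrite mem_iota. Qed.

Definition dec (s : seq bool) : {set 'I_7} := [set i : 'I_7 | nb s i].
Definition code (S : {set 'I_7}) : seq bool := mkseq (fun i => inord i \in S) 7.

Lemma in_dec s (i : 'I_7) : (i \in dec s) = nb s i.
Proof. by rewrite inE. Qed.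

Lemma dec_code S : dec (code S) = S.
Proof.
by apply/setP => i; rewrite in_dec /nb nth_mkseq // inord_val.
Qed.

Lemma code_allbl S : code S \in allbl.
Proof. exact: mkseq_allbl. Qed.

Lemma dec_inj s t : s \in allbl -> t \in allbl -> dec s = dec t -> s = t.
Proof.
move=> hs ht e; apply: (@eq_from_nth _ false); first by rewrite !allbl_size.
move=> i; rewrite allbl_size // => hi.
have := congr1 (fun S : {set 'I_7} => (Ordinal hi) \in S) e; by rewrite !in_dec.
Qed.

Lemma dec_eq s t : s \in allbl -> t \in allbl -> (dec s == dec t) = (s == t).
Proof.
move=> hs ht; apply/eqP/eqP => [|->] //; exact: dec_inj.
Qed.

Section Sums.
Variable F : fieldType.

Lemma msum_big {X} (l : seq X) (f : X -> F) : msum l f = \sum_(x <- l) f x.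
Proof. by elim: l => [|x l IH] /=; rewrite ?big_nil ?big_cons ?IH. Qed.

Lemma eq_msum_in {X : eqType} (l : seq X) (f g : X -> F) :
  {in l, f =1 g} -> msum l f = msum l g.
Proof.
elim: l => [|x l IH] //= h; rewrite h ?mem_head // IH // => y hy.
by apply: h; rewrite inE hy orbT.
Qed.

Lemma msumD {X} (l : seq X) (f g : X -> F) : msum l (fun x => f x + g x) = msum l f + msum l g.
Proof. elim: l => [|x l IH] /=; rewrite ?addr0 // IH; ring. Qed.

Lemma msumZ {X} (l : seq X) c (f : X -> F) : msum l (fun x => c * f x) = c * msum l f.
Proof. elim: l => [|x l IH] /=; rewrite ?mulr0 // IH; ring. Qed.

Lemma msum0 {X} (l : seq X) : msum l (fun _ => 0 : F) = 0.
Proof. by elim: l => [|x l IH] //=; rewrite IH addr0. Qed.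

Lemma sum_sets (G : {set 'I_7} -> F) : \sum_(S : {set 'I_7}) G S = msum allbl (fun s => G (dec s)).
Proof.
rewrite msum_big -(big_map dec predT G); apply: perm_big.
apply: uniq_perm; rewrite ?index_enum_uniq //.
  rewrite map_inj_in_uniq ?uniq_allbl //; exact: dec_inj.
move=> S; rewrite mem_index_enum -{1}(dec_code S) map_f //; exact: code_allbl.
Qed.

Lemma sum_I7 (G : 'I_7 -> F) : \sum_(i < 7) G i = msum I7 (fun n => G (inord n)).
Proof.
rewrite msum_big /I7 -/(index_iota 0 7) big_mkord.
by apply: eq_bigr => i _; rewrite inord_val.
Qed.

Lemma memoE (a : seq bool -> F) s : s \in allbl -> memo a s = a s.
Proof.
move=> hs; rewrite /memo (nth_map [::]) ?index_mem // nth_index //.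
Qed.

End Sums.

Lemma sumn_I7 (G : 'I_7 -> nat) : (\sum_(i < 7) G i)%N = sumn [seq G (inord n) | n <- I7].
Proof.
rewrite sumnE big_map /I7 -/(index_iota 0 7) big_mkord.
by apply: eq_bigr => i _; rewrite inord_val.
Qed.

Lemma card_I7 (P : pred 'I_7) : #|P| = sumn [seq (P (inord n) : nat) | n <- I7].
Proof.
transitivity (\sum_(i<7) (P i : nat))%N; last exact: sumn_I7.
rewrite -sum1_card big_mkcond /=.
by apply: eq_bigr => i _; rewrite unfold_in; case: (P i).
Qed.
Lemma eq_inord (x : 'I_7) i : (i < 7)%N -> (x == inord i) = (val x == i).
Proof. by move=> hi; rewrite -(inj_eq val_inj) /= inordK. Qed.

Lemma subset_dec s k : (dec s \subset dec k) = subb s k.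
Proof.
apply/subsetP/allP => [h i | h i].
  rewrite mem_I7 => hi; apply/implyP => hs.
  by have := h (inord i); rewrite !in_dec inordK //; apply.
rewrite !in_dec => hs; have := h i; rewrite mem_I7 ltn_ord hs /=; exact.
Qed.

Lemma setD_dec k s : dec k :\: dec s = dec (diffb k s).
Proof. by apply/setP => i; rewrite !inE /nb /diffb nth_mkseq // andbC. Qed.

Lemma setC_dec k : ~: dec k = dec (compb k).
Proof. by apply/setP => i; rewrite !inE /nb /compb nth_mkseq. Qed.

Lemma setD2_dec k i j : (i < 7)%N -> (j < 7)%N ->
  dec k :\ inord i :\ inord j = dec (rm2 k i j).
Proof.
move=> hi hj; apply/setP => x; rewrite !inE /nb /rm2 nth_mkseq // !eq_inord //.
by rewrite -!andbA; do !bool_congr.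
Qed.

Lemma setU1_dec m s : (m < 7)%N -> inord m |: dec s = dec (addb m s).
Proof.
move=> hm; apply/setP => x; rewrite !inE /nb /addb nth_mkseq // eq_inord //.
Qed.

Lemma card_set_I7 (S : {set 'I_7}) : #|S| = sumn [seq (inord n \in S : nat) | n <- I7].
Proof.
transitivity (\sum_(i<7) (i \in S : nat))%N; last exact: sumn_I7.
rewrite -sum1_card big_mkcond; apply: eq_bigr => i _; by case: (i \in S).
Qed.

Lemma pos_dec k (i : 'I_7) : pos (dec k) i = posb k i.
Proof.
rewrite /pos card_set_I7 /posb; congr sumn; apply/eq_in_map => n; rewrite mem_I7 => hn.
by rewrite inE in_dec inordK.
Qed.

Lemma pos_dec' k i : (i < 7)%N -> pos (dec k) (inord i) = posb k i.
Proof. by move=> hi; rewrite pos_dec inordK. Qed.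

Lemma popc_dec s : #|dec s| = popc s.
Proof.
rewrite card_set_I7 /popc; congr sumn; apply/eq_in_map => n; rewrite mem_I7 => hn.
by rewrite in_dec inordK.
Qed.

Lemma cnt_dec s t : #|[set ij in setX (dec s) (dec t) | (ij.2 < ij.1)%N]| = cnt s t.
Proof.
transitivity (\sum_(i<7) \sum_(j<7) ((nb s i && nb t j && (j < i)%N) : nat))%N.
  rewrite pair_bigA /= -sum1_card big_mkcond; apply: eq_bigr => [[i j]] _ /=.
  by rewrite !inE /=; case: (_ && _).
rewrite sumn_I7 /cnt; congr sumn; apply/eq_in_map => n; rewrite mem_I7 => hn.
rewrite sumn_I7; congr sumn; apply/eq_in_map => m; rewrite mem_I7 => hm.
by rewrite !inordK.
Qed.

Lemma shuffle_dec (R : rcfType) s t : shuffle_sign R (dec s) (dec t) = sgn R (cnt s t).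
Proof. by rewrite /shuffle_sign cnt_dec. Qed.

Lemma set0_dec : set0 = dec (nseq 7 false).
Proof. by apply/setP => i; rewrite !inE /nb nth_nseq if_same. Qed.

Lemma set1_dec p : (1 <= p <= 7)%N -> [set ix p] = dec (unitb p).
Proof.
move=> /andP[h1 h7]; apply/setP => i; rewrite !inE /nb /unitb nth_mkseq // /ix eq_inord //.
by case: p h1 h7.
Qed.
Section Rep.
Variable R : rcfType.
Local Notation form := (Defs.form R).

Definition rep (a : form) (A : seq bool -> R) := forall s, s \in allbl -> a (dec s) = A s.

Lemma rep_eq a b A B : rep a A -> rep b B -> {in allbl, A =1 B} -> a = b.
Proof.
move=> ha hb e; apply/ffunP => S; rewrite -(dec_code S) ha ?hb ?e //; exact: code_allbl.
Qed.

Lemma rep_self (a : form) : rep a (fun s => a (dec s)).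
Proof. by []. Qed.

Lemma rep0 : rep 0 (fun _ => 0).
Proof. by move=> s _; rewrite ffunE. Qed.

Lemma rep_wedge a b A B : rep a A -> rep b B -> rep (wedge a b) (Mwedge A B).
Proof.
move=> ha hb s hs; rewrite /Mwedge memoE // ffunE big_mkcond sum_sets.
apply: eq_msum_in => t ht; rewrite subset_dec setD_dec shuffle_dec.
by case: subb => //; rewrite ha // hb // mkseq_allbl.
Qed.

Lemma rep_hodge a A : rep a A -> rep (hodge a) (Mhodge A).
Proof.
by move=> ha s hs; rewrite /Mhodge memoE // ffunE setC_dec shuffle_dec ha // mkseq_allbl.
Qed.

Lemma rep_add a b A B : rep a A -> rep b B -> rep (Defs.addf a b) (Madd A B).
Proof. by move=> ha hb s hs; rewrite ffunE ha ?hb. Qed.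

Lemma rep_scale c a A : rep a A -> rep (scalef c a) (Mscale c A).
Proof. by move=> ha s hs; rewrite ffunE ha. Qed.

Lemma rep_form1 : rep (form1 R) (Mform1 R).
Proof.
move=> s hs; rewrite ffunE /Mform1 set0_dec dec_eq //.
Qed.

Lemma rep_e1f p : (1 <= p <= 7)%N -> rep (e1f R p) (Me1f R p).
Proof.
by move=> hp s hs; rewrite ffunE /Me1f set1_dec // dec_eq // mkseq_allbl.
Qed.

Lemma rep_eup l : all (fun p => 1 <= p <= 7)%N l -> rep (eup R l) (Meup R l).
Proof.
elim: l => [|p l IH] /=; first by move=> _; exact: rep_form1.
by case/andP => hp hl; apply: rep_wedge; [exact: rep_e1f | exact: IH].
Qed.

Lemma rep_phi : rep (phi_std R) (Mphi R).
Proof.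
by do !first [apply: rep_add | apply: rep_scale | apply: rep_eup].
Qed.

Lemma rep_tau : rep (tau_s R) (Mtau R).
Proof.
by do !first [apply: rep_add | apply: rep_scale | apply: rep_eup].
Qed.

Lemma rep_norm2 a A : rep a A -> norm2 a = Mnorm2 A.
Proof.
move=> ha; rewrite /norm2 sum_sets; apply: eq_msum_in => s hs; by rewrite ha.
Qed.

Lemma rep_dCE (brk : 'I_7 -> 'I_7 -> 'rV[R]_7) (g : nat -> nat -> nat -> R) a A :
  (forall i j m, (i < 7)%N -> (j < 7)%N -> (m < 7)%N -> brk (inord i) (inord j) 0 (inord m) = g i j m) ->
  rep a A -> rep (dCE brk a) (MdCE g A).
Proof.
move=> hg ha s hs; rewrite /MdCE memoE // ffunE big_mkcond sum_I7.
apply: eq_msum_in => i; rewrite mem_I7 => hi; rewrite in_dec inordK //.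
case: (nb s i) => //; rewrite big_mkcond sum_I7.
apply: eq_msum_in => j; rewrite mem_I7 => hj; rewrite in_dec !inordK //.
case: (_ && _) => //; rewrite !pos_dec' // sum_I7; congr (_ * _).
apply: eq_msum_in => m; rewrite mem_I7 => hm; rewrite hg //; congr (_ * _).
rewrite /eval_front /Mevf setD2_dec // in_dec inordK //.
case: (nb _ m) => //; rewrite pos_dec' // setU1_dec // ha //; exact: mkseq_allbl.
Qed.

Lemma rep_homog a A p : rep a A -> {in allbl, forall s, popc s != p -> A s = 0} -> homog p a.
Proof.
move=> ha h S; rewrite -(dec_code S) popc_dec => hp; rewrite ha ?h //; exact: code_allbl.
Qed.

End Rep.
Section Morph.
Variables (F K : fieldType) (f : {rmorphism F -> K}).

Definition mrep (A : seq bool -> F) (B : seq bool -> K) := forall s, f (A s) = B s.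

Lemma f_msum {X} (l : seq X) h h' : (forall x, f (h x) = h' x) -> f (msum l h) = msum l h'.
Proof. by move=> e; elim: l => [|x l IH] /=; rewrite ?rmorph0 // rmorphD e IH. Qed.

Lemma f_nth_map (l : seq (seq bool)) h h' i : (forall s, f (h s) = h' s) ->
  f (nth 0 (map h l) i) = nth 0 (map h' l) i.
Proof.
move=> e; elim: l i => [|x l IH] [|i] /=; rewrite ?rmorph0 //; exact: IH.
Qed.

Lemma mrep_memo h h' : (forall s, f (h s) = h' s) -> mrep (memo h) (memo h').
Proof. by move=> e s; rewrite /memo; apply: f_nth_map. Qed.

Lemma f_sgn n : f (sgn F n) = sgn K n.
Proof. by rewrite /sgn rmorphXn rmorphN1. Qed.

Lemma f_cv c : f (cv F c) = cv K c.
Proof.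
case: c => [|[|[|[|c]]]] /=; rewrite ?rmorph0 ?rmorph1 ?rmorphN1 //;
by rewrite ?rmorphN fmorph_div rmorph1 rmorph_nat.
Qed.

Lemma mrep_wedge A B A' B' : mrep A A' -> mrep B B' -> mrep (Mwedge A B) (Mwedge A' B').
Proof.
move=> ha hb; apply: mrep_memo => k; apply: f_msum => s.
by case: subb; rewrite ?rmorph0 // !rmorphM f_sgn ha hb.
Qed.

Lemma mrep_hodge A A' : mrep A A' -> mrep (Mhodge A) (Mhodge A').
Proof. by move=> ha; apply: mrep_memo => k; rewrite rmorphM f_sgn ha. Qed.

Lemma mrep_add A B A' B' : mrep A A' -> mrep B B' -> mrep (Madd A B) (Madd A' B').
Proof. by move=> ha hb s; rewrite /Madd rmorphD ha hb. Qed.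

Lemma mrep_scale c c' A A' : f c = c' -> mrep A A' -> mrep (Mscale c A) (Mscale c' A').
Proof. by move=> hc ha s; rewrite /Mscale rmorphM hc ha. Qed.

Lemma mrep_form1 : mrep (Mform1 F) (Mform1 K).
Proof. by move=> s; rewrite /Mform1; case: (_ == _); rewrite ?rmorph0 ?rmorph1. Qed.

Lemma mrep_e1f p : mrep (Me1f F p) (Me1f K p).
Proof. by move=> s; rewrite /Me1f; case: (_ == _); rewrite ?rmorph0 ?rmorph1. Qed.

Lemma mrep_eup l : mrep (Meup F l) (Meup K l).
Proof.
elim: l => [|p l IH] /=; first exact: mrep_form1.
apply: mrep_wedge => //; exact: mrep_e1f.
Qed.

Lemma mrep_phi : mrep (Mphi F) (Mphi K).
Proof.
by do !first [apply: mrep_add | apply: mrep_scale | apply: mrep_eup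
  | rewrite ?rmorphN1 ?rmorphN ?rmorph_nat //].
Qed.

Lemma mrep_tau : mrep (Mtau F) (Mtau K).
Proof.
by do !first [apply: mrep_add | apply: mrep_scale | apply: mrep_eup
  | rewrite ?rmorphN1 ?rmorphN ?rmorph_nat //].
Qed.

Lemma mrep_dCE g g' A A' : (forall i j m, f (g i j m) = g' i j m) -> mrep A A' ->
  mrep (MdCE g A) (MdCE g' A').
Proof.
move=> hg ha; apply: mrep_memo => k; apply: f_msum => i.
case: nb; rewrite ?rmorph0 //; apply: f_msum => j.
case: (_ && _); rewrite ?rmorph0 // rmorphM f_sgn; congr (_ * _); apply: f_msum => m.
rewrite rmorphM hg /Mevf; case: nb; rewrite ?rmorph0 // rmorphM f_sgn ha //.
Qed.

Lemma f_norm2 A A' : mrep A A' -> f (Mnorm2 A) = Mnorm2 A'.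
Proof. by move=> ha; apply: f_msum => s; rewrite rmorphXn ha. Qed.

End Morph.

Lemma MdCE_lin (F : fieldType) (g0 g1 : nat -> nat -> nat -> F) e A s : s \in allbl ->
  MdCE (fun i j m => g0 i j m + e * g1 i j m) A s = MdCE g0 A s + e * MdCE g1 A s.
Proof.
move=> hs; rewrite /MdCE !memoE // -msumZ -msumD; apply: eq_msum_in => i _.
case: nb; last by rewrite mulr0 addr0.
rewrite -msumZ -msumD; apply: eq_msum_in => j _.
case: (_ && _); last by rewrite mulr0 addr0.
have -> : msum I7 (fun m => (g0 i j m + e * g1 i j m) * Mevf A m (rm2 s i j)) =
   msum I7 (fun m => g0 i j m * Mevf A m (rm2 s i j)) + e * msum I7 (fun m => g1 i j m * Mevf A m (rm2 s i j)).
  by rewrite -msumZ -msumD; apply: eq_msum_in => m _; ring.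
ring.
Qed.
Section Ext.
Variable F : fieldType.
Implicit Types A B : seq bool -> F.

Lemma Mwedge_ext A A' B B' : {in allbl, A =1 A'} -> {in allbl, B =1 B'} ->
  {in allbl, Mwedge A B =1 Mwedge A' B'}.
Proof.
move=> ha hb s hs; rewrite /Mwedge !memoE //; apply: eq_msum_in => t ht.
by case: subb => //; rewrite ha // hb // mkseq_allbl.
Qed.

Lemma Mhodge_ext A A' : {in allbl, A =1 A'} -> {in allbl, Mhodge A =1 Mhodge A'}.
Proof. by move=> ha s hs; rewrite /Mhodge !memoE // ha // mkseq_allbl. Qed.

Lemma MdCE_ext g A A' : {in allbl, A =1 A'} -> {in allbl, MdCE g A =1 MdCE g A'}.
Proof.
move=> ha s hs; rewrite /MdCE !memoE //; apply: eq_msum_in => i _.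
case: nb => //; apply: eq_msum_in => j _; case: (_ && _) => //.
congr (_ * _); apply: eq_msum_in => m _; rewrite /Mevf; case: nb => //.
by rewrite ha ?mkseq_allbl.
Qed.

Lemma Madd_ext A A' B B' : {in allbl, A =1 A'} -> {in allbl, B =1 B'} ->
  {in allbl, Madd A B =1 Madd A' B'}.
Proof. by move=> ha hb s hs; rewrite /Madd ha ?hb. Qed.

Lemma Mscale_ext c A A' : {in allbl, A =1 A'} -> {in allbl, Mscale c A =1 Mscale c A'}.
Proof. by move=> ha s hs; rewrite /Mscale ha. Qed.

Lemma Mnorm2_ext A A' : {in allbl, A =1 A'} -> Mnorm2 A = Mnorm2 A'.
Proof. by move=> ha; apply: eq_msum_in => s hs; rewrite ha. Qed.
End Ext.
Section Table.
Lemma splitE (x : 'I_(3 + 4)) :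
  split x = if (x < 3)%N then inl (inord x) else inr (inord (x - 3)).
Proof.
case: splitP => [a ea | b eb].
  by congr inl; apply: val_inj; rewrite /= ea inordK.
congr inr; apply: val_inj.
by rewrite /= eb addKn inordK.
Qed.

Local Arguments matrix_of_fun : simpl never.
Lemma brk_table (R : rcfType) (eta : R) i j m : (i < 7)%N -> (j < 7)%N -> (m < 7)%N ->
  s_brk eta (inord i) (inord j) 0 (inord m) = cv R (t0 i j m) + eta * cv R (t1 i j m).
Proof.
move=> hi hj hm; rewrite /s_brk /semidirect_brk !splitE !inordK //.
case: i hi => [|[|[|[|[|[|[|i]]]]]]] // hi;
case: j hj => [|[|[|[|[|[|[|j]]]]]]] // hj; rewrite /=.
all: case: m hm => [|[|[|[|[|[|[|m]]]]]]] // hm.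
all: rewrite /= /brk_r /mu /rowl /mx4 ?mxE ?splitE ?inordK //=.
all: rewrite ?mxE ?splitE ?inordK //=.
all: try ring.
all: try (rewrite mxE ?inordK //=; ring).
all: try (rewrite ?mxE ?inordK //=; ring).
Qed.

End Table.
Definition chk (A B : seq bool -> rat) := all (fun k => A k == B k) allbl.
Lemma chkP A B : chk A B -> {in allbl, A =1 B}.
Proof. by move=> /allP h s hs; apply/eqP/h. Qed.
Definition chkh p (A : seq bool -> rat) := all (fun s => (popc s != p) ==> (A s == 0)) allbl.
Lemma chkhP p A : chkh p A -> {in allbl, forall s, popc s != p -> A s = 0}.
Proof. by move=> /allP h s hs hp; have := h s hs; rewrite hp => /eqP. Qed.

Definition G0 (F : fieldType) i j m : F := cv F (t0 i j m).
Definition G1 (F : fieldType) i j m : F := cv F (t1 i j m).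
Definition Mb (F : fieldType) := Madd (Mscale (-(1/2)) (Meup F [:: 2; 3]%N))
  (Madd (Meup F [:: 4; 5]%N) (Mscale (-1) (Meup F [:: 6; 7]%N))).
Definition Merp (F : fieldType) (Phi Tau : seq bool -> F) :=
  Madd (Mscale (Mnorm2 Tau / 6) Phi) (Mscale (1/6) (Mhodge (Mwedge Tau Tau))).
Definition Z (F : fieldType) : seq bool -> F := fun _ => 0.
Definition PhiT (s : seq bool) : rat := nth 0 phiL (index s allbl).
Definition TauT (s : seq bool) : rat := nth 0 tauL (index s allbl).

Lemma c_phi : chk (Mphi rat) PhiT. Proof. by vm_compute. Qed.
Lemma c_tau : chk (Mtau rat) TauT. Proof. by vm_compute. Qed.
Lemma c_closed0 : chk (MdCE (G0 rat) PhiT) (Z rat). Proof. by vm_compute. Qed.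
Lemma c_closed1 : chk (MdCE (G1 rat) PhiT) (Z rat). Proof. by vm_compute. Qed.
Lemma c_exact0 : chk (MdCE (G0 rat) (Mb rat)) PhiT. Proof. by vm_compute. Qed.
Lemma c_exact1 : chk (MdCE (G1 rat) (Mb rat)) (Z rat). Proof. by vm_compute. Qed.
Lemma c_bh : chkh 2 (Mb rat). Proof. by vm_compute. Qed.
Lemma c_th : chkh 2 TauT. Proof. by vm_compute. Qed.
Lemma c_tw : chk (Mwedge TauT (Mhodge PhiT)) (Z rat). Proof. by vm_compute. Qed.
Lemma c_tor0 : chk (MdCE (G0 rat) (Mhodge PhiT)) (Mwedge TauT PhiT).
Proof. by vm_compute. Qed.
Lemma c_tor1 : chk (MdCE (G1 rat) (Mhodge PhiT)) (Z rat). Proof. by vm_compute. Qed.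
Lemma c_erp0 : chk (MdCE (G0 rat) TauT) (Merp PhiT TauT). Proof. by vm_compute. Qed.
Lemma c_erp1 : chk (MdCE (G1 rat) TauT) (Z rat). Proof. by vm_compute. Qed.

Definition cinv Q := (nth (Q, [::]) cinvL (find (fun p => p.1 == Q) cinvL)).2.
Definition Wt (F : fieldType) (Phi : seq bool -> F) K s :=
  if subb s K then sgn F (cnt s (diffb K s)) * Phi (diffb K s) else 0.
Definition chkinv (Phi : seq bool -> rat) :=
  all (fun Q => (popc Q == 2%N) ==> all (fun s => (popc s == 2%N) ==>
     (msum (cinv Q) (fun p => cv rat p.2 * Wt Phi p.1 s) == (s == Q)%:R)) allbl) allbl.
Lemma c_inv : chkinv PhiT. Proof. by vm_compute. Qed.
Lemma c_cinv_allbl : all (fun Q => all (fun p => p.1 \in allbl) (cinv Q)) allbl.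
Proof. by vm_compute. Qed.
Section Forms.
Variables (R : rcfType) (eta : R).
Local Notation form := (Defs.form R).
Local Notation rr := (@ratr R).

Definition gE i j m : R := cv R (t0 i j m) + eta * cv R (t1 i j m).

Lemma rep_d a A : rep a A -> rep (dCE (s_brk eta) a) (MdCE gE A).
Proof. apply: rep_dCE => i j m hi hj hm; exact: brk_table. Qed.

Lemma d_eval (A0 : seq bool -> rat) (A : seq bool -> R) s : mrep rr A0 A -> s \in allbl ->
  MdCE gE A s = rr (MdCE (G0 rat) A0 s) + eta * rr (MdCE (G1 rat) A0 s).
Proof.
move=> hA hs; rewrite /gE MdCE_lin //.
by congr (_ + _ * _); symmetry; apply: mrep_dCE => // i j m; rewrite f_cv.
Qed.

Lemma rr_phi s : s \in allbl -> rr (PhiT s) = Mphi R s.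
Proof. by move=> hs; rewrite -(chkP c_phi) // (mrep_phi rr). Qed.
Lemma rr_tau s : s \in allbl -> rr (TauT s) = Mtau R s.
Proof. by move=> hs; rewrite -(chkP c_tau) // (mrep_tau rr). Qed.

Lemma mrep_b : mrep rr (Mb rat) (Mb R).
Proof.
by do !first [apply: mrep_add | apply: mrep_scale | apply: mrep_eup
  | rewrite ?rmorphN1 ?rmorphN ?fmorph_div ?rmorph1 ?rmorph_nat //].
Qed.

Definition bform : form := Defs.addf (scalef (-(1/2)) (eup R [:: 2; 3]%N))
  (Defs.addf (eup R [:: 4; 5]%N) (scalef (-1) (eup R [:: 6; 7]%N))).
Lemma rep_b : rep bform (Mb R).
Proof. by do !first [apply: rep_add | apply: rep_scale | apply: rep_eup]. Qed.

Lemma closedR : closed_form (s_brk eta) (phi_std R).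
Proof.
apply: (rep_eq (rep_d (rep_phi R)) (rep0 R)) => s hs.
rewrite (d_eval (mrep_phi rr) hs) (MdCE_ext (G0 rat) (chkP c_phi) hs) (MdCE_ext (G1 rat) (chkP c_phi) hs).
by rewrite (chkP c_closed0 hs) (chkP c_closed1 hs) /Z rmorph0 mulr0 addr0.
Qed.

Lemma exactR : exact_form (s_brk eta) (phi_std R).
Proof.
exists bform; split.
  apply: (rep_homog rep_b) => s hs hp.
  by rewrite -mrep_b (chkhP c_bh hs hp) rmorph0.
apply: (rep_eq (rep_d rep_b) (rep_phi R)) => s hs.
rewrite (d_eval mrep_b hs) (chkP c_exact0 hs) (chkP c_exact1 hs) /Z rmorph0 mulr0 addr0.
exact: rr_phi.
Qed.

Lemma homog_tau : homog 2 (tau_s R).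
Proof.
apply: (rep_homog (rep_tau R)) => s hs hp.
by rewrite -(rr_tau hs) (chkhP c_th hs hp) rmorph0.
Qed.

Lemma torsionR : is_torsion_form (s_brk eta) (phi_std R) (tau_s R).
Proof.
split; first exact: homog_tau.
split.
  apply: (rep_eq (rep_wedge (rep_tau R) (rep_hodge (rep_phi R))) (rep0 R)) => s hs.
  rewrite -(mrep_wedge (mrep_tau rr) (mrep_hodge (mrep_phi rr))).
  rewrite (Mwedge_ext (chkP c_tau) (Mhodge_ext (chkP c_phi)) hs).
  by rewrite (chkP c_tw hs) /Z rmorph0.
apply: (rep_eq (rep_d (rep_hodge (rep_phi R))) (rep_wedge (rep_tau R) (rep_phi R))) => s hs.
rewrite (d_eval (mrep_hodge (mrep_phi rr)) hs) (MdCE_ext (G0 rat) (Mhodge_ext (chkP c_phi)) hs) (MdCE_ext (G1 rat) (Mhodge_ext (chkP c_phi)) hs).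
rewrite (chkP c_tor0 hs) (chkP c_tor1 hs) /Z rmorph0 mulr0 addr0.
rewrite -(Mwedge_ext (chkP c_tau) (chkP c_phi) hs).
exact: (mrep_wedge (mrep_tau rr) (mrep_phi rr)).
Qed.

Lemma erpR : ERP (s_brk eta) (phi_std R) (tau_s R).
Proof.
rewrite /ERP (rep_norm2 (rep_tau R)).
have hr : rep (Defs.addf (scalef (Mnorm2 (Mtau R) / 6) (phi_std R))
    (scalef (1 / 6) (hodge (wedge (tau_s R) (tau_s R))))) (Merp (Mphi R) (Mtau R)).
  by apply: rep_add; apply: rep_scale;
    [exact: rep_phi | apply: rep_hodge; apply: rep_wedge; exact: rep_tau].
apply: (rep_eq (rep_d (rep_tau R)) hr) => s hs.
rewrite (d_eval (mrep_tau rr) hs) (MdCE_ext (G0 rat) (chkP c_tau) hs) (MdCE_ext (G1 rat) (chkP c_tau) hs).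
rewrite (chkP c_erp0 hs) (chkP c_erp1 hs) /Z rmorph0 mulr0 addr0.
have hm : mrep rr (Merp (Mphi rat) (Mtau rat)) (Merp (Mphi R) (Mtau R)).
  apply: mrep_add; apply: mrep_scale.
  - by rewrite fmorph_div (f_norm2 (mrep_tau rr)) rmorph_nat.
  - exact: mrep_phi.
  - by rewrite fmorph_div rmorph1 rmorph_nat.
  - apply: mrep_hodge; apply: mrep_wedge; exact: mrep_tau.
have he : {in allbl, Merp (Mphi rat) (Mtau rat) =1 Merp PhiT TauT}.
  rewrite /Merp (Mnorm2_ext (chkP c_tau)); apply: Madd_ext; apply: Mscale_ext.
    exact: (chkP c_phi).
  by apply: Mhodge_ext; apply: Mwedge_ext; exact: (chkP c_tau).
by rewrite -(he s hs) hm.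
Qed.

(* injectivity of wedging with phi on 2-forms *)
Lemma inv_lemma (X : seq bool -> R) Q : Q \in allbl -> popc Q = 2%N ->
  (forall s, s \in allbl -> popc s != 2%N -> X s = 0) ->
  msum (cinv Q) (fun p => cv R p.2 * Mwedge X (Mphi R) p.1) = X Q.
Proof.
move=> hQ pQ hX.
have hK : forall p, p \in cinv Q -> p.1 \in allbl.
  by move=> p hp; have /allP/(_ Q hQ)/allP/(_ p hp) := c_cinv_allbl.
transitivity (msum (cinv Q) (fun p => cv R p.2 * msum allbl (fun s => X s * Wt (Mphi R) p.1 s))).
  apply: eq_msum_in => p hp; rewrite /Mwedge memoE ?hK //; congr (_ * _).
  by apply: eq_msum_in => s _; rewrite /Wt; case: subb; [ring | rewrite mulr0].
transitivity (msum allbl (fun s => X s * msum (cinv Q) (fun p => cv R p.2 * Wt (Mphi R) p.1 s))).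
  rewrite !msum_big; under eq_bigr do rewrite msum_big big_distrr.
  rewrite exchange_big; apply: eq_bigr => s _; rewrite msum_big big_distrr.
  by apply: eq_bigr => p _; rewrite /= mulrCA.
transitivity (msum allbl (fun s => X s * (s == Q)%:R)).
  apply: eq_msum_in => s hs; case: (boolP (popc s == 2%N)) => ps; last first.
    by rewrite (hX s hs ps) !mul0r.
  congr (_ * _).
  have h1 := allP c_inv Q hQ; rewrite pQ eqxx implyTb in h1.
  have h2 := allP h1 s hs; rewrite ps implyTb in h2; move/eqP: h2 => e.
  rewrite -[RHS](rmorph_nat rr) -e; symmetry; apply: f_msum => p.
  rewrite rmorphM f_cv /Wt; case: subb; first by rewrite rmorphM f_sgn; congr (_ * (_ * _)); exact: (rr_phi (mkseq_allbl _)).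
  by rewrite rmorph0.
rewrite msum_big (big_rem Q hQ) /= eqxx mulr1 big1_seq ?addr0 // => s /andP[_ hs].
have := hs; rewrite (mem_rem_uniq _ uniq_allbl) inE => /andP[/negbTE -> _].
by rewrite mulr0.
Qed.

Lemma uniqR tau' : is_torsion_form (s_brk eta) (phi_std R) tau' -> tau' = tau_s R.
Proof.
case=> h2 [_ hd]; case: torsionR => _ [_ hd0].
have hw : wedge tau' (phi_std R) = wedge (tau_s R) (phi_std R) by rewrite -hd -hd0.
have hXa : forall s, s \in allbl -> popc s != 2%N -> tau' (dec s) = 0.
  by move=> s hs hp; rewrite h2 // popc_dec.
have hXb : forall s, s \in allbl -> popc s != 2%N -> Mtau R s = 0.
  by move=> s hs hp; rewrite -(rep_tau R hs) homog_tau // popc_dec.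
apply: (rep_eq (rep_self tau') (rep_tau R)) => Q hQ.
case: (boolP (popc Q == 2%N)) => pQ; last by rewrite hXa // hXb.
rewrite -(inv_lemma hQ (eqP pQ) hXa) -(inv_lemma hQ (eqP pQ) hXb).
apply: eq_msum_in => p hp; congr (_ * _).
have hK : p.1 \in allbl by have /allP/(_ Q hQ)/allP/(_ p hp) := c_cinv_allbl.
rewrite -(rep_wedge (rep_self tau') (rep_phi R) hK).
by rewrite -(rep_wedge (rep_tau R) (rep_phi R) hK) hw.
Qed.

End Forms.
Section Lie.
Variable R : rcfType.

Lemma lb_entry n (brk : 'I_n -> 'I_n -> 'rV[R]_n) x y k :
  lie_bracket brk x y 0 k = \sum_i \sum_j x 0 i * y 0 j * brk i j 0 k.
Proof.
rewrite /lie_bracket summxE; apply: eq_bigr => i _; rewrite summxE.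
by apply: eq_bigr => j _; rewrite mxE.
Qed.

Lemma basis_entry n (i j : 'I_n) : basis_vec R i 0 j = (i == j)%:R.
Proof. by rewrite /basis_vec mxE eqxx eq_sym. Qed.

Lemma sum_delta n (i : 'I_n) (F : 'I_n -> R) : \sum_j (i == j)%:R * F j = F i.
Proof.
rewrite (bigD1 i) //= eqxx mul1r big1 ?addr0 // => j hj.
by rewrite eq_sym (negbTE hj) mul0r.
Qed.

Lemma ad_mul n (brk : 'I_n -> 'I_n -> 'rV[R]_n) x u :
  u *m ad_mx brk x = lie_bracket brk x u.
Proof.
apply/rowP => k; rewrite !mxE lb_entry.
transitivity (\sum_l u 0 l * \sum_a x 0 a * brk a l 0 k).
  apply: eq_bigr => l _; rewrite !mxE lb_entry; congr (_ * _).
  apply: eq_bigr => a _.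
  transitivity (\sum_b (l == b)%:R * (x 0 a * brk a b 0 k)); last exact: sum_delta.
  by apply: eq_bigr => b _; rewrite basis_entry; ring.
rewrite exchange_big; apply: eq_bigr => a _; rewrite big_distrr; apply: eq_bigr => l _ /=.
ring.
Qed.

Lemma lb_basis n (brk : 'I_n -> 'I_n -> 'rV[R]_n) i j :
  lie_bracket brk (basis_vec R i) (basis_vec R j) = brk i j.
Proof.
apply/rowP => k; rewrite lb_entry.
transitivity (\sum_a (i == a)%:R * brk a j 0 k); last exact: sum_delta.
apply: eq_bigr => a _.
transitivity ((i == a)%:R * \sum_b (j == b)%:R * brk a b 0 k); last by rewrite sum_delta.
rewrite big_distrr; apply: eq_bigr => b _ /=.
by rewrite !basis_entry; ring.
Qed.

Definition Dm (S : pred 'I_7) : 'M[R]_7 := diag_mx (\row_m (S m)%:R).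
Definition supp (S : pred 'I_7) (x : 'rV[R]_7) := forall m, ~~ S m -> x 0 m = 0.

Lemma sub_supp x S : (x <= Dm S)%MS -> supp S x.
Proof.
case/submxP => c -> m hm; rewrite mul_mx_diag !mxE (negbTE hm) mulr0 //.
Qed.

Lemma supp_sub x S : supp S x -> (x <= Dm S)%MS.
Proof.
move=> hx; have -> : x = x *m Dm S.
  apply/rowP => m; rewrite mul_mx_diag !mxE.
  by case: (boolP (S m)) => h; rewrite ?h ?mulr1 // (hx m h) mul0r.
exact: submxMl.
Qed.

Lemma derived_sub (brk : 'I_7 -> 'I_7 -> 'rV[R]_7) A (T S : pred 'I_7) :
  (forall i, supp T (row i A)) ->
  (forall i j m : 'I_7, T i -> T j -> ~~ S m -> brk i j 0 m = 0) ->
  (derived brk A <= Dm S)%MS.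
Proof.
move=> hA hb; apply/sumsmx_subP => i _; apply/sumsmx_subP => j _; rewrite genmxE.
apply: supp_sub => m hm; rewrite lb_entry; apply: big1 => a _; apply: big1 => b _.
case: (boolP (T a)) => ta; last by rewrite (hA i a ta) !mul0r.
case: (boolP (T b)) => tb; last by rewrite (hA j b tb) mulr0 mul0r.
by rewrite hb // mulr0.
Qed.

Lemma Dm_supp (A : 'M[R]_7) S : (A <= Dm S)%MS -> forall i, supp S (row i A).
Proof. by move=> h i; apply: sub_supp; apply: submx_trans h; exact: row_sub. Qed.

Lemma Dm0 : Dm pred0 = 0.
Proof. by apply/matrixP => i j; rewrite !mxE /= mul0rn. Qed.

End Lie.
Section Lie2.
Variable R : rcfType.

Lemma brk_zero (eta : R) (Tn Sn : pred nat) :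
  all (fun i => all (fun j => all (fun m => Tn i ==> Tn j ==> ~~ Sn m ==>
     (t0 i j m == 0%N) && (t1 i j m == 0%N)) I7) I7) I7 ->
  forall i j m : 'I_7, Tn i -> Tn j -> ~~ Sn m -> s_brk eta i j 0 m = 0.
Proof.
move=> h i j m ti tj sm.
have hi := ltn_ord i; have hj := ltn_ord j; have hm := ltn_ord m.
have := allP h (val i); rewrite mem_I7 => /(_ hi) /allP /(_ (val j)); rewrite mem_I7 => /(_ hj).
move=> /allP /(_ (val m)); rewrite mem_I7 => /(_ hm); rewrite ti tj sm /=.
case/andP => /eqP e0 /eqP e1.
by rewrite -(inord_val i) -(inord_val j) -(inord_val m) brk_table // e0 e1 /= mulr0 addr0.
Qed.

Lemma solv (eta : R) : solvable_lie (s_brk eta).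
Proof.
exists 3%N.
have h1 : (derived (s_brk eta) 1%:M <= Dm R (fun m : 'I_7 => (0 < m)%N))%MS.
  apply: (derived_sub (T := fun m : 'I_7 => predT (m : nat))) => [i m /= //|].
  by apply: (@brk_zero eta predT (fun m => (0 < m)%N)); vm_compute.
have h2 : (derived (s_brk eta) (derived (s_brk eta) 1%:M) <= Dm R (fun m : 'I_7 => (5 <= m)%N))%MS.
  apply: (derived_sub (T := fun m : 'I_7 => (0 < m)%N)); first exact: Dm_supp h1.
  by apply: (@brk_zero eta (fun m => (0 < m)%N) (fun m => (5 <= m)%N)); vm_compute.
have h3 : (derived (s_brk eta) (derived (s_brk eta) (derived (s_brk eta) 1%:M)) <= Dm R pred0)%MS.
  apply: (derived_sub (T := fun m : 'I_7 => (5 <= m)%N)); first exact: Dm_supp h2.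
  by apply: (@brk_zero eta (fun m => (5 <= m)%N) pred0); vm_compute.
move: h3; rewrite Dm0 submx0 => /eqP /= ->; exact: mxrank0.
Qed.

Lemma key_alg (c a b p q : R) : b != 0 -> c * p = a * p - b * q -> c * q = b * p + a * q ->
  p = 0 /\ q = 0.
Proof.
move=> hb h1 h2.
have e1 : (c - a) * p = - (b * q) by rewrite mulrBl h1; ring.
have e2 : (c - a) * q = b * p by rewrite mulrBl h2; ring.
have e3 : ((c - a) ^+ 2 + b ^+ 2) * p = 0.
  have : (c - a) * ((c - a) * p) + b * (b * p) = 0 by rewrite e1 -e2; ring.
  by move=> <-; ring.
have nz : (c - a) ^+ 2 + b ^+ 2 != 0.
  by rewrite paddr_eq0 ?sqr_ge0 // !sqrf_eq0 (negbTE hb) andbF.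
have hp : p = 0 by move: e3 => /eqP; rewrite mulf_eq0 (negbTE nz) /= => /eqP.
split => //; move: e1; rewrite hp mulr0 => /eqP; rewrite eq_sym oppr_eq0 mulf_eq0 (negbTE hb) /=.
by move/eqP.
Qed.

Definition lvl (n : nat) : nat := if n == 0%N then 0%N else if (n < 5)%N then 1%N else 2%N.

Lemma brk0 (i j m : 'I_7) : s_brk (0 : R) i j 0 m != 0 -> ((i == ord0) && (j == m)) || (lvl j < lvl m)%N.
Proof.
have hi := ltn_ord i; have hj := ltn_ord j; have hm := ltn_ord m.
rewrite -{1}(inord_val i) -{1}(inord_val j) -{1}(inord_val m) brk_table // mul0r addr0.
have h : all (fun i => all (fun j => all (fun m => (t0 i j m != 0%N) ==>
     ((i == 0%N) && (j == m)) || (lvl j < lvl m)%N) I7) I7) I7 by vm_compute.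
have := allP h (val i); rewrite mem_I7 => /(_ hi) /allP /(_ (val j)); rewrite mem_I7 => /(_ hj).
move=> /allP /(_ (val m)); rewrite mem_I7 => /(_ hm).
case e : (t0 i j m) => [|c] /=; first by rewrite eqxx.
move=> H _; rewrite -(inj_eq val_inj) -(inj_eq val_inj j m); exact: H.
Qed.

Lemma eig_real (x : 'rV[R]_7) : only_real_eigenvalues (ad_mx (s_brk 0) x).
Proof.
move=> a b [u [v [nz [eu ev]]]]; apply/eqP/negPn/negP => hb.
rewrite !ad_mul in eu ev.
have cu : forall m, lie_bracket (s_brk 0) x u 0 m = a * u 0 m - b * v 0 m.
  by move=> m; rewrite eu !mxE.
have cv' : forall m, lie_bracket (s_brk 0) x v 0 m = b * u 0 m + a * v 0 m.
  by move=> m; rewrite ev !mxE.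
have key : forall (m : 'I_7) (w : 'rV[R]_7), (forall j : 'I_7, (lvl j < lvl m)%N -> w 0 j = 0) ->
    lie_bracket (s_brk 0) x w 0 m = (x 0 ord0 * s_brk 0 ord0 m 0 m) * w 0 m.
  move=> m w hw.
  have z1 : \sum_(j | j != m) x 0 ord0 * w 0 j * s_brk 0 ord0 j 0 m = 0.
    apply: big1 => j hj; case: (eqVneq (s_brk (0 : R) ord0 j 0 m) 0) => [->|h]; first by rewrite mulr0.
    move/brk0: h; rewrite eqxx (negbTE hj) /= => hl; by rewrite (hw j hl) mulr0 mul0r.
  have z2 : \sum_(i | i != ord0) \sum_j x 0 i * w 0 j * s_brk 0 i j 0 m = 0.
    apply: big1 => i hi; apply: big1 => j _.
    case: (eqVneq (s_brk (0 : R) i j 0 m) 0) => [->|h]; first by rewrite mulr0.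
    move/brk0: h; rewrite (negbTE hi) /= => hl; by rewrite (hw j hl) mulr0 mul0r.
  rewrite lb_entry (bigD1 ord0) //= z2 addr0 (bigD1 m) //= z1 addr0; ring.
have ind : forall L m, (lvl (val m) < L)%N -> u 0 m = 0 /\ v 0 m = 0.
  elim=> [|L IH] m hm //.
  have hw : forall w : 'rV[R]_7, (forall j : 'I_7, (lvl j < L)%N -> w 0 j = 0) ->
      forall j : 'I_7, (lvl j < lvl m)%N -> w 0 j = 0.
    by move=> w h j hj; apply: h; apply: leq_trans hj _.
  have ku := key m u (hw u (fun j hj => (IH j hj).1)).
  have kv := key m v (hw v (fun j hj => (IH j hj).2)).
  apply: (key_alg (c := x 0 ord0 * s_brk 0 ord0 m 0 m) (a := a) hb).
    by rewrite -ku cu.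
  by rewrite -kv cv'.
have all0 : forall m, u 0 m = 0 /\ v 0 m = 0.
  move=> m; apply: (ind 3%N); rewrite /lvl; case: ifP => //; case: ifP => //.
case: nz => /eqP []; apply/rowP => m; rewrite mxE; by case: (all0 m).
Qed.

End Lie2.
Section Lie3.
Variable R : rcfType.

Lemma not_cs (eta : R) : eta != 0 -> ~ completely_solvable (s_brk eta).
Proof.
move=> he [_ h].
have hb : - eta != 0 by rewrite oppr_eq0.
apply/negP: hb; apply/negPn/eqP; apply: (h (basis_vec R (inord 0 : 'I_7)) 1).
exists (basis_vec R (inord 1 : 'I_7)), (basis_vec R (inord 2 : 'I_7)); split.
  left; apply/eqP => e.
  have e1 : basis_vec R (inord 1 : 'I_7) 0 (inord 1) = (0 : 'rV[R]_7) 0 (inord 1) by rewrite e.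
  by move: e1; rewrite basis_entry eqxx mxE => /eqP; rewrite oner_eq0.
rewrite !ad_mul !lb_basis.
split; apply/rowP => m; have hm := ltn_ord m;
  rewrite -(inord_val m) brk_table // !mxE ?eqxx /= ?eq_inord ?inordK //.
all: case: m hm => -[|[|[|[|[|[|[|k]]]]]]] //= hk hk'.
all: rewrite !inordK //=; ring.
Qed.

Lemma ad_entry (eta : R) y i k : (i < 7)%N -> (k < 7)%N ->
  ad_mx (s_brk eta) y (inord i) (inord k) = msum I7 (fun a => y 0 (inord a) * gE eta a i k).
Proof.
move=> hi hk; rewrite mxE lb_entry sum_I7; apply: eq_msum_in => a; rewrite mem_I7 => ha.
transitivity (\sum_j ((inord i : 'I_7) == j)%:R * (y 0 (inord a) * s_brk eta (inord a) j 0 (inord k))).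
  by apply: eq_bigr => j _; rewrite basis_entry; ring.
by rewrite sum_delta brk_table.
Qed.

Lemma tr_formula (eta : R) y : \tr (ad_mx (s_brk eta) y) = 2 * y 0 ord0.
Proof.
rewrite /mxtrace sum_I7.
rewrite (eq_msum_in (g := fun i => msum I7 (fun a => y 0 (inord a) * gE eta a i i))); last first.
  by move=> i; rewrite mem_I7 => hi; rewrite ad_entry.
have -> : y 0 ord0 = y 0 (inord 0) by congr (y 0 _); apply: val_inj; rewrite /= inordK.
rewrite /msum /gE /I7 /=.
ring.
Qed.

Lemma tr2_formula (eta : R) y :
  \tr (ad_mx (s_brk eta) y *m ad_mx (s_brk eta) y) = (3 - 4 * eta ^+ 2) * (y 0 ord0) ^+ 2.
Proof.
rewrite /mxtrace sum_I7.
rewrite (eq_msum_in (g := fun i => msum I7 (fun k => msum I7 (fun a => y 0 (inord a) * gE eta a i k)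
   * msum I7 (fun b => y 0 (inord b) * gE eta b k i)))); last first.
  move=> i; rewrite mem_I7 => hi; rewrite mxE sum_I7; apply: eq_msum_in => k.
  by rewrite mem_I7 => hk; rewrite !ad_entry.
have -> : y 0 ord0 = y 0 (inord 0) by congr (y 0 _); apply: val_inj; rewrite /= inordK.
rewrite /msum /gE /I7 /=.
by field.
Qed.

End Lie3.
Section Lie4.
Variable R : rcfType.

Lemma conj_tr (P M : 'M[R]_7) : P \in unitmx -> \tr (invmx P *m M *m P) = \tr M.
Proof. by move=> hu; rewrite mxtrace_mulC mulmxA mulmxV // mul1mx. Qed.

Lemma noniso (e e' : R) : 0 <= e -> 0 <= e' -> e != e' -> ~ lie_iso (s_brk e) (s_brk e').
Proof.
move=> h0 h0' hne [P [hu hP]].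
pose x0 := basis_vec R (ord0 : 'I_7).
have key : ad_mx (s_brk e') (x0 *m P) = invmx P *m ad_mx (s_brk e) x0 *m P.
  apply/row_matrixP => i; rewrite !rowE ad_mul.
  have hv : (delta_mx 0 i : 'rV[R]_7) = (delta_mx 0 i *m invmx P) *m P by rewrite -mulmxA mulVmx // mulmx1.
  by rewrite {1}hv -hP -ad_mul !mulmxA.
have sq : forall M : 'M[R]_7, (invmx P *m M *m P) *m (invmx P *m M *m P) = invmx P *m (M *m M) *m P.
  by move=> M; rewrite -!mulmxA (mulmxA P) mulmxV // mul1mx.
have t1 := tr_formula e' (x0 *m P).
rewrite key conj_tr // tr_formula in t1.
have t2 := tr2_formula e' (x0 *m P).
rewrite key sq conj_tr // tr2_formula in t2.
have hx : x0 0 ord0 = 1 by rewrite /x0 basis_entry eqxx.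
rewrite hx in t1 t2.
move: t1 t2; set y0 := (x0 *m P) 0 ord0 => t1 t2.
have hy : y0 = 1 by lra.
rewrite hy in t2.
case: (ltgtP e e') => [lt|lt|eq]; last by rewrite eq eqxx in hne.
  nra.
nra.
Qed.
End Lie4.
Theorem mainTheorem6 (R : rcfType) :
  (forall eta : R,
     exact_form (s_brk eta) (@phi_std R)
  /\ closed_form (s_brk eta) (@phi_std R)
  /\ is_torsion_form (s_brk eta) (@phi_std R) (@tau_s R)
  /\ (forall tau' : Defs.form R, is_torsion_form (s_brk eta) (@phi_std R) tau' -> tau' = @tau_s R)
  /\ ERP (s_brk eta) (@phi_std R) (@tau_s R))
  /\ completely_solvable (s_brk (0 : R))
  /\ (forall eta : R, eta != 0 ->
        solvable_lie (s_brk eta) /\ ~ completely_solvable (s_brk eta))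
  /\ (forall eta eta' : R, 0 <= eta -> 0 <= eta' -> eta != eta' ->
        ~ lie_iso (s_brk eta) (s_brk eta')).
Proof.
split.
  move=> eta; split; first exact: exactR.
  split; first exact: closedR.
  split; first exact: torsionR.
  split; first exact: uniqR.
  exact: erpR.
split.
  by split; [exact: solv | exact: eig_real].
split.
  by move=> eta he; split; [exact: solv | exact: not_cs].
by move=> e e' h0 h0' hne; exact: noniso.
Qed.
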